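(* Let $\Lambda$ be a finite set of pixels, $S=\{0,1\}^{\Lambda}$, and let $S_I\subseteq S$ be a nonempty set (the images with label $1$), with $N_I=|S_I|$. Let $F:S\to\{0,1\}$ be its indicator function and $f=F/\sqrt{N_I}$ its normalization. Partition $\Lambda=A\sqcup B$, identify $s\in S$ with $(s_A,s_B)\in\{0,1\}^A\times\{0,1\}^B$, let $\partial\subseteq A$ be a set of boundary pixels with $|\partial|=L_{AB}$, and let $R\subseteq A$ be a region adjacent to the boundary with $|R|=r\,L_{AB}$. Assume: (1) if $s,s'\in S_I$ satisfy $s_B=s'_B$, then $s|_{\partial}=s'|_{\partial}$; (2) for $s_A,s'_A\in\{0,1\}^A$ each of which is extendable (i.e. there is some $s_B$ with $(s_A,s_B)\in S_I$), the number $N_{s_A s'_A}=\#\{s_B\in\{0,1\}^B:(s_A,s_B)\in S_I\text{ and }(s'_A,s_B)\in S_I\}$ depends only on the restrictions $s_A|_R$ and $s'_A|_R$. Then the bipartite entanglement entropy of $f$ satisfies $S_{AB}\le r\,L_{AB}\log 2$.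
   Context: For $f:S\to\mathbb{C}$ with $\sum_s|f(s)|^2=1$, its density matrix is $\rho_{s,s'}=\overline{f(s)}\,f(s')$, and the reduced density matrix on $A$ is $\rho^A_{s_A,s'_A}=\sum_{s_B\in\{0,1\}^B}\rho_{(s_A,s_B),(s'_A,s_B)}$. The bipartite entanglement entropy is $S_{AB}=S_A=-\mathrm{tr}(\rho^A\log\rho^A)$ (computed from the eigenvalues of $\rho^A$, with $0\log 0=0$). *)

(* Defs.v *)
From HB Require Import structures.
From mathcomp Require Import all_boot all_order all_algebra.
From mathcomp Require Import boolp reals exp.
Set Implicit Arguments. Unset Strict Implicit. Unset Printing Implicit Defensive.
Import Order.TTheory GRing.Theory Num.Theory.
Local Open Scope ring_scope.

Section Defs.
Variable Lam : finType.

Definition img := {ffun Lam -> bool}.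

Definition sub_t (X : {set Lam}) := {x : Lam | x \in X}.
Definition conf (X : {set Lam}) := {ffun sub_t X -> bool}.

Definition restr (X : {set Lam}) (s : img) : conf X := [ffun x => s (val x)].

Definition glue (A : {set Lam}) (sA : conf A) (sB : conf (~: A)) : img :=
  [ffun x => match insub x : option (sub_t A) with
             | Some a => sA a
             | None => match insub x : option (sub_t (~: A)) with
                       | Some b => sB b
                       | None => false
                       end
             end].

Variable R : realType.

Definition normf (SI : {set img}) (s : img) : R :=
  (s \in SI)%:R / Num.sqrt (#|SI|%:R).

(* density matrix rho_{s,s'} = conj(f s) f s'  (f is real-valued here) *)
Definition rho (f : img -> R) (s s' : img) : R := f s * f s'.

Definition rhoA (A : {set Lam}) (f : img -> R) (sA sA' : conf A) : R :=
  \sum_(sB : conf (~: A)) rho f (glue sA sB) (glue sA' sB).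

Definition rhoA_mx (A : {set Lam}) (f : img -> R) : 'M[R]_#|{: conf A}| :=
  \matrix_(i, j) rhoA f (enum_val i) (enum_val j).
End Defs.

(* eigenvalues of a square matrix counted with multiplicity: a sequence rs with
   char_poly M = \prod_(x <- rs) ('X - x) (unique up to permutation); chosen
   classically, [::] if the characteristic polynomial does not split over R. *)
Definition eigvals (R : realType) (n : nat) (M : 'M[R]_n) : seq R :=
  match pselect (exists rs : seq R, char_poly M = \prod_(x <- rs) ('X - x%:P)) with
  | left H => proj1_sig (cid H)
  | right _ => [::]
  end.

(* von Neumann entropy -tr(rho log rho) from the eigenvalues, 0 log 0 = 0 *)
Definition entropy (R : realType) (n : nat) (M : 'M[R]_n) : R :=
  - \sum_(l <- eigvals M) (if l == 0 then 0 else l * ln l).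

Definition S_AB (Lam : finType) (R : realType) (A : {set Lam}) (f : img Lam -> R) : R :=
  entropy (rhoA_mx A f).

(* Main.v *)
Require Import Defs.
From HB Require Import structures.
From mathcomp Require Import all_boot all_order all_algebra.
From mathcomp Require Import boolp reals exp.
From mathcomp Require Import ring lra.
Import Order.TTheory GRing.Theory Num.Theory.
Local Open Scope ring_scope.

Lemma sylv (F : fieldType) n k (U : 'M[F]_(n,k)) (V : 'M[F]_(k,n)) :
  'X^k * char_poly (U *m V) = 'X^n * char_poly (V *m U).
Proof.
set Up := map_mx (@polyC F) U; set Vp := map_mx (@polyC F) V.
pose Big := block_mx ('X%:M : 'M_n) Up Vp (1%:M : 'M_k).
have E1 : \det Big = char_poly (U *m V).
  have := det_mulmx (block_mx 1%:M (- Up) 0 1%:M) Big.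
  rewrite mulmx_block det_ublock !det1 !mul1r.
  rewrite !mul1mx !mul0mx !add0r ?mulmx1 addrN mulNmx.
  rewrite det_lblock det1 mulr1 => <-.
  by rewrite /char_poly /char_poly_mx map_mxM.
have := det_mulmx (block_mx 1%:M 0 (- Vp) 'X%:M) Big.
rewrite mulmx_block det_lblock det1 mul1r det_scalar E1.
rewrite !mul1mx !mul0mx !addr0 mulNmx mul_scalar_mx mul_mx_scalar addNr.
rewrite det_ublock det_scalar mulmx1 => <-.
rewrite /char_poly /char_poly_mx map_mxM.
by rewrite mulNmx addrC.
Qed.
Lemma count_nz (F : fieldType) (rs : seq F) n k (q : {poly F}) :
  'X^k * \prod_(x <- rs) ('X - x%:P) = 'X^n * q -> size rs = n ->
  (count (fun x : F => (x != 0)%R) rs <= k)%N.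
Proof.
move=> E Hs.
rewrite (bigID (fun x => x == 0)) /= in E.
set P := \prod_(x <- rs | x != 0) ('X - x%:P) in E.
have HX : \prod_(x <- rs | x == 0) ('X - x%:P) = 'X^(count (fun x => x == 0) rs).
  rewrite (eq_bigr (fun _ => 'X)); last by move=> x /eqP ->; rewrite subr0.
  rewrite big_const_seq; elim: (count _ _) => //= m ->; by rewrite exprS.
rewrite HX in E.
have Hc := count_predC (fun x => x == 0) rs.
set z := count (fun x => x == 0) rs in E Hc.
rewrite Hs in Hc.
have -> : count (fun x : F => (x != 0)%R) rs = (n - z)%N.
  by rewrite -Hc addKn.
rewrite leq_subLR leqNgt addnC; apply/negP => Hlt.
rewrite mulrA -exprD in E.
have E2 : 'X^n = 'X^(k + z) * 'X^(n - (k + z)) :> {poly F}.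
  by rewrite -exprD subnKC // ltnW.
rewrite E2 -mulrA in E.
have /mulfI E3 := (expf_neq0 (k + z) (negbT (@polyX_eq0 F))).
move: E => /E3 E.
have : P.[0] = 0.
  by rewrite E hornerM hornerXn expr0n /= subn_eq0 leqNgt Hlt mul0r.
rewrite /P horner_prod; apply/eqP; rewrite prodf_seq_neq0.
apply/allP => x _; apply/implyP => Hx.
by rewrite hornerXsubC sub0r oppr_eq0.
Qed.
Lemma ent_bound (R : realType) (rs : seq R) (k : nat) :
  (forall x, x \in rs -> 0 <= x) -> \sum_(x <- rs) x = 1 ->
  (count (fun x : R => (x != 0)%R) rs <= k)%N ->
  - \sum_(l <- rs) (if l == 0 then 0 else l * ln l) <= ln k%:R.
Proof.
move=> Hpos Hsum Hk.
set c := count (fun x : R => (x != 0)%R) rs in Hk.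
have c0 : (0 < c)%N.
  rewrite lt0n; apply/negP => /eqP Hc.
  have : \sum_(x <- rs) x = 0.
    rewrite big_seq big1 // => x Hx; apply/eqP; apply/negPn/negP => Hx0.
    have : (0 < c)%N by rewrite -has_count; apply/hasP; exists x.
    by rewrite Hc.
  by rewrite Hsum => /eqP; rewrite oner_eq0.
have cR : (0 : R) < c%:R by rewrite ltr0n.
have step : forall l, l \in rs ->
   - (if l == 0 then 0 else l * ln l) <= l * ln c%:R + (if l == 0 then 0 else c%:R^-1) - l.
  move=> l Hl; case: eqP => [->|/eqP Hl0]; first by rewrite oppr0 mul0r !add0r ?oppr0 ?subr0.
  have lp : 0 < l by rewrite lt_def Hl0 Hpos.
  have y0 : 0 < (c%:R * l)^-1 by rewrite invr_gt0 mulr_gt0.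
  have := @le_ln1Dx R ((c%:R * l)^-1 - 1).
  rewrite addrCA addrN addr0 ltrBrDl addrN y0 => /(_ isT).
  rewrite lnV ?posrE ?mulr_gt0 // lnM ?posrE // => H.
  have := ler_wpM2l (ltW lp) H.
  rewrite invfM mulrBr mulrN mulrDr mulr1.
  have -> : l * (c%:R^-1 / l) = c%:R^-1 by field; rewrite gt_eqF.
  move=> H2; lra.
rewrite -sumrN.
rewrite big_seq; apply: le_trans (ler_sum _ step) _; rewrite -big_seq.
rewrite sumrB big_split /= -mulr_suml Hsum mul1r.
have gen : forall (a : R) s, \sum_(i <- s) (if i == 0 then 0 else a) = a *+ count (fun x : R => x != 0) s.
  move=> a; elim => [|b s IH]; first by rewrite big_nil.
  by rewrite big_cons IH /=; case: eqP => _ /=; rewrite ?add0r // mulrS.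
rewrite gen -/c.
rewrite -[(c%:R^-1 : R) *+ c]mulr_natr mulVf ?gt_eqF // addrK.
rewrite ler_ln ?posrE ?ltr0n ?(leq_trans c0) // ler_nat //.
Qed.

Lemma psd_eig (R : realType) n m (Fm : 'M[R]_(n,m)) a :
  root (char_poly (Fm *m Fm^T)) a -> 0 <= a.
Proof.
rewrite -eigenvalue_root_char => /eigenvalueP [v Hv vn0].
have E : (v *m (Fm *m Fm^T) *m v^T) 0 0 = a * (v *m v^T) 0 0.
  by rewrite Hv -scalemxAl mxE.
rewrite mulmxA -mulmxA -trmx_mul in E.
set w := v *m Fm in E *.
have H1 : 0 <= (w *m w^T) 0 0.
  rewrite mxE; apply: sumr_ge0 => i _; rewrite !mxE -expr2; exact: sqr_ge0.
have H2 : 0 < (v *m v^T) 0 0.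
  rewrite mxE; have [i Hi] : exists i, v 0 i != 0.
    apply/existsP; apply: contraR vn0 => /existsPn H.
    by apply/eqP/rowP => i; rewrite mxE; apply/eqP; move: (H i); rewrite negbK.
  rewrite (bigD1 i) //= ltr_pwDl //.
    by rewrite mxE lt_def mulf_neq0 // -expr2 sqr_ge0.
  by apply: sumr_ge0 => j _; rewrite mxE -expr2; exact: sqr_ge0.
rewrite E in H1.
by rewrite -(pmulr_lge0 _ H2).
Qed.

Lemma spec_bound (R : realType) n m k (Fm : 'M[R]_(n,m)) (U : 'M_(n,k)) (V : 'M_(k,n)) :
  (0 < k)%N -> Fm *m Fm^T = U *m V -> \tr (Fm *m Fm^T) = 1 ->
  entropy (Fm *m Fm^T) <= ln k%:R.
Proof.
move=> k0 EM Htr.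
rewrite /entropy /eigvals.
case: pselect => [H|_]; last first.
  by rewrite big_nil oppr0 ln_ge0 // ler1n.
case: (cid H) => rs /= Hrs.
have Hsz : size rs = n.
  by apply: succn_inj; rewrite -(size_char_poly (Fm *m Fm^T)) Hrs size_prod_XsubC.
have n0 : (0 < n)%N.
  rewrite lt0n; apply/negP => /eqP n0; move: Htr.
  rewrite /mxtrace big1; last by move=> i; have := ltn_ord i; rewrite {2}n0.
  by move/eqP; rewrite eq_sym oner_eq0.
apply: ent_bound.
- by move=> x Hx; apply: (@psd_eig _ _ _ Fm); rewrite Hrs root_prod_XsubC.
- have := char_poly_trace (Fm *m Fm^T) n0.
  rewrite Hrs -[in X in X.-1]Hsz coefPn_prod_XsubC ?Hsz -?lt0n // Htr.
  by move/eqP; rewrite eqr_opp => /eqP.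
- apply: (@count_nz _ rs n k (char_poly (V *m U))) => //.
  by rewrite -Hrs EM sylv.
Qed.


Lemma restr_glueA (Lam : finType) (A : {set Lam}) (sA : conf A) (sB : conf (~: A)) : restr A (glue sA sB) = sA.
Proof.
apply/ffunP => a; rewrite !ffunE valK //.
Qed.

Lemma restr_glueB (Lam : finType) (A : {set Lam}) (sA : conf A) (sB : conf (~: A)) : restr (~: A) (glue sA sB) = sB.
Proof.
apply/ffunP => b; rewrite !ffunE.
have hb := valP b; rewrite /= in_setC in hb.
by rewrite insubF ?valK //=; apply/negbTE.
Qed.

Lemma glue_restr (Lam : finType) (A : {set Lam}) (s : img Lam) : glue (restr A s) (restr (~: A) s) = s.
Proof.
apply/ffunP => x; rewrite ffunE.
case: insubP => [a Ha Hv|Hn]; first by rewrite ffunE Hv.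
have Hx : x \in ~: A by rewrite in_setC.
by rewrite (insubT (fun x => x \in ~: A) Hx) ffunE.
Qed.

Lemma sum_bool_card (T : finType) (R : realType) (P : pred T) :
  \sum_(x : T) ((P x)%:R : R) = #|[set x | P x]|%:R.
Proof.
rewrite -natr_sum; congr (_%:R).
rewrite (eq_bigr (fun x => if P x then 1%N else 0%N)); last by move=> x _; case: (P x).
by rewrite -big_mkcond /= sum1_card cardsE.
Qed.

Theorem theorem3 (R : realType) (Lam : finType) (SI : {set img Lam})
  (A bd Rg : {set Lam}) (r : R) :
  SI != set0 ->
  bd \subset A -> Rg \subset A ->
  #|Rg|%:R = r * #|bd|%:R ->
  (forall s s' : img Lam, s \in SI -> s' \in SI ->
     restr (~: A) s = restr (~: A) s' -> forall x, x \in bd -> s x = s' x) ->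
  (forall sA sA' tA tA' : conf A,
     (exists sB, glue sA sB \in SI) -> (exists sB, glue sA' sB \in SI) ->
     (exists sB, glue tA sB \in SI) -> (exists sB, glue tA' sB \in SI) ->
     (forall a : sub_t A, val a \in Rg -> sA a = tA a) ->
     (forall a : sub_t A, val a \in Rg -> sA' a = tA' a) ->
     #|[set sB : conf (~: A) | (glue sA sB \in SI) && (glue sA' sB \in SI)]| =
     #|[set sB : conf (~: A) | (glue tA sB \in SI) && (glue tA' sB \in SI)]|) ->
  S_AB A (normf R SI) <= r * #|bd|%:R * ln 2.
Proof.
move=> SI0 bdA RgA Hcard _ H2.
set f := normf R SI.
set N := #|SI|.
have N0 : (0 < N)%N by rewrite card_gt0.
have NR : (0 : R) < N%:R by rewrite ltr0n.
have fsq : forall s s', f s * f s' = ((s \in SI) && (s' \in SI))%:R / N%:R.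
  move=> s s'; rewrite /f /normf mulrACA -natrM mulnb -invfM -expr2 sqr_sqrtr //.
pose G (sA sA' : conf A) := #|[set sB : conf (~: A) | (glue sA sB \in SI) && (glue sA' sB \in SI)]|.
have rhoE : forall sA sA', rhoA f sA sA' = (G sA sA')%:R / N%:R.
  move=> sA sA'; rewrite /rhoA /rho.
  under eq_bigr do rewrite fsq.
  by rewrite -mulr_suml sum_bool_card.
pose Fm : 'M[R]_(#|{: conf A}|, #|{: conf (~: A)}|) :=
  \matrix_(i, j) f (glue (enum_val i) (enum_val j)).
have EM : rhoA_mx A f = Fm *m Fm^T.
  apply/matrixP => i j; rewrite !mxE /rhoA /rho.
  rewrite (big_enum_val (A := {: conf (~: A)})) /=.
  by apply: eq_bigr => c _; rewrite !mxE.
have Htr : \tr (Fm *m Fm^T) = 1.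
  rewrite -EM /mxtrace.
  under eq_bigr do rewrite mxE.
  rewrite -(big_enum_val (A := {: conf A}) (fun sA => rhoA f sA sA)) /=.
  rewrite /rhoA /rho.
  under eq_bigr do under eq_bigr do rewrite fsq andbb.
  rewrite pair_bigA /=.
  rewrite (reindex (fun s : img Lam => (restr A s, restr (~: A) s))) /=; last first.
    exists (fun p => glue p.1 p.2) => [s _|[a b] _]; first by rewrite glue_restr.
    by rewrite /= restr_glueA restr_glueB.
  under eq_bigr do rewrite glue_restr.
  rewrite -mulr_suml sum_bool_card.
  have -> : [set x | x \in SI] = SI by apply/setP => x; rewrite inE.
  by rewrite mulfV // gt_eqF.
pose ext (sA : conf A) := [exists sB, glue sA sB \in SI].
pose g (sA : conf A) : conf Rg := [ffun x : sub_t Rg =>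
   match insub (val x) : option (sub_t A) with Some a => sA a | None => false end].
have gagree : forall sA sA', g sA = g sA' -> forall a : sub_t A, val a \in Rg -> sA a = sA' a.
  move=> sA sA' E a Ha.
  have := congr1 (fun h : conf Rg => h (exist _ (val a) Ha : sub_t Rg)) E.
  by rewrite !ffunE /= valK.
have G0 : forall sA sA', ~~ ext sA || ~~ ext sA' -> G sA sA' = 0%N.
  move=> sA sA' He; apply/eqP; rewrite cards_eq0; apply/eqP/setP => b.
  rewrite !inE; apply/negP => /andP [h1 h2].
  by case/orP: He => /existsPn /(_ b); rewrite ?h1 ?h2.
have extP : forall sA, ext sA -> exists sB, glue sA sB \in SI.
  by move=> sA /existsP.
pose M := rhoA_mx A f.
pose V : 'M[R]_(#|{: conf Rg}|, #|{: conf A}|) :=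
  \matrix_(c, j) (ext (enum_val j) && (g (enum_val j) == enum_val c))%:R.
pose U : 'M[R]_(#|{: conf A}|, #|{: conf Rg}|) :=
  \matrix_(i, c) (if [pick j | ext (enum_val j) && (g (enum_val j) == enum_val c)] is Some j
                  then M i j else 0).
have EUV : M = U *m V.
  apply/matrixP => i j; rewrite [in RHS]mxE.
  case: (boolP (ext (enum_val j))) => ej; last first.
    rewrite big1; last by move=> c _; rewrite [V _ _]mxE (negbTE ej) mulr0.
    by rewrite /M mxE rhoE G0 ?ej ?orbT // mul0r.
  rewrite (bigD1 (enum_rank (g (enum_val j)))) //= big1 ?addr0; last first.
    move=> c Hc; rewrite [V _ _]mxE ej /=.
    case: eqP => [E|_]; last by rewrite mulr0.
    by move: Hc; rewrite E enum_valK eqxx.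
  rewrite [V _ _]mxE ej enum_rankK eqxx mulr1 [U _ _]mxE.
  case: (pickP (fun j0 => ext (enum_val j0) && (g (enum_val j0) == enum_val (enum_rank (g (enum_val j)))))) => [j' /andP [ej' /eqP gj'] | Hn]; last first.
    by move: (Hn j); rewrite ej enum_rankK eqxx.
  rewrite enum_rankK in gj'.
  rewrite /M !mxE !rhoE; congr (_%:R / _).
  case: (boolP (ext (enum_val i))) => ei; last by rewrite !G0 ?ei.
  apply: H2; try exact: extP.
    by [].
  exact: gagree.
have Hk : #|{: conf Rg}| = (2 ^ #|Rg|)%N.
  rewrite card_ffun card_bool; congr (_ ^ _)%N.
  rewrite /sub_t card_sig; apply: eq_card => x; by rewrite !inE.
rewrite /S_AB -/f EM.
apply: le_trans (@spec_bound R _ _ _ Fm U V _ _ Htr) _.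
- by rewrite Hk expn_gt0.
- by rewrite -EM.
rewrite Hk natrX lnXn // -Hcard mulr_natl.
by [].
Qed.
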